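(* Let $x,y$ satisfy $x+y=u_3+u_4$ and $xy=u_1u_2$. Then for every $n\ge0$, $$P_n(u_1,u_2,u_3,u_4\mid\alpha,\beta)=\sum_{k=0}^n\binom nk A_k\Bigl(x,y\,\Big|\,\frac{\alpha+\beta}{2},\frac{\alpha+\beta}{2}\Bigr)\frac{(\beta-\alpha)^{n-k}(u_3-u_4)^{n-k}}{2^{n-k}}.$$
   Context: For $\sigma=\sigma_1\cdots\sigma_m\in\mathfrak S_m$: ${\rm asc}(\sigma)$, ${\rm des}(\sigma)$ are the numbers of $i\in[m-1]$ with $\sigma_i<\sigma_{i+1}$, resp. $\sigma_i>\sigma_{i+1}$; ${\rm LRmax}(\sigma)$ is the number of $i$ with $\sigma_j<\sigma_i$ for all $j<i$; ${\rm RLmax}(\sigma)$ is the number of $i$ with $\sigma_j<\sigma_i$ for all $j>i$. With the convention $\sigma_0=\sigma_{m+1}=0$: ${\rm W}(\sigma)$ is the number of $i\in[m]$ with $\sigma_{i-1}<\sigma_i>\sigma_{i+1}$; ${\rm V}(\sigma)$ is the number of $i$ with $1<i<m$ and $\sigma_{i-1}>\sigma_i<\sigma_{i+1}$; ${\rm rdd}(\sigma)$ is the number of $i$ with $1<i\le m$ and $\sigma_{i-1}>\sigma_i>\sigma_{i+1}$; ${\rm lda}(\sigma)$ is the number of $i$ with $1\le i<m$ and $\sigma_{i-1}<\sigma_i<\sigma_{i+1}$. Define $$P_n(u_1,u_2,u_3,u_4\mid\alpha,\beta)=\sum_{\sigma\in\mathfrak S_{n+1}}u_1^{{\rm V}(\sigma)}u_2^{{\rm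 W}(\sigma)-1}u_3^{{\rm rdd}(\sigma)}u_4^{{\rm lda}(\sigma)}\alpha^{{\rm LRmax}(\sigma)-1}\beta^{{\rm RLmax}(\sigma)-1},$$ and the $(\alpha,\beta)$-Eulerian polynomials $A_n(x,y\mid\alpha,\beta)=\sum_{\sigma\in\mathfrak S_{n+1}}x^{{\rm asc}(\sigma)}y^{{\rm des}(\sigma)}\alpha^{{\rm LRmax}(\sigma)-1}\beta^{{\rm RLmax}(\sigma)-1}$ for $n\ge0$ (so $A_0=1$). Here $A_k(x,y\mid\gamma,\gamma)$ is symmetric in $x,y$. *)

(* Defs.v *)
From HB Require Import structures.
From mathcomp Require Import all_boot all_order all_algebra all_fingroup.
Set Implicit Arguments. Unset Strict Implicit. Unset Printing Implicit Defensive.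
Import GRing.Theory.

(* A permutation sigma of [m] is encoded by its word sigma_1 ... sigma_m with
   values in {1,...,m}.  [pget s i] is sigma_i for 1 <= i <= m, with the
   convention sigma_0 = sigma_{m+1} = 0. *)
Definition pword (m : nat) (s : 'S_m) : seq nat :=
  [seq (val (s i)).+1 | i <- enum 'I_m].

Definition pget (w : seq nat) (i : nat) : nat := nth 0 (0 :: w ++ [:: 0]) i.

Section Stats.
Variable w : seq nat.
Local Notation m := (size w).
Local Notation g := (pget w).

Definition asc_w := count (fun i => g i < g i.+1) (iota 1 m.-1).
Definition des_w := count (fun i => g i > g i.+1) (iota 1 m.-1).
Definition LRmax_w :=
  count (fun i => all (fun j => g j < g i) (iota 1 i.-1)) (iota 1 m).
Definition RLmax_w :=
  count (fun i => all (fun j => g j < g i) (iota i.+1 (m - i))) (iota 1 m).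
Definition W_w := count (fun i => (g i.-1 < g i) && (g i > g i.+1)) (iota 1 m).
Definition V_w :=
  count (fun i => (g i.-1 > g i) && (g i < g i.+1)) (iota 2 (m - 2)).
Definition rdd_w :=
  count (fun i => (g i.-1 > g i) && (g i > g i.+1)) (iota 2 m.-1).
Definition lda_w :=
  count (fun i => (g i.-1 < g i) && (g i < g i.+1)) (iota 1 m.-1).
End Stats.

Definition asc m (s : 'S_m) := asc_w (pword s).
Definition des m (s : 'S_m) := des_w (pword s).
Definition LRmax m (s : 'S_m) := LRmax_w (pword s).
Definition RLmax m (s : 'S_m) := RLmax_w (pword s).
Definition Wst m (s : 'S_m) := W_w (pword s).
Definition Vst m (s : 'S_m) := V_w (pword s).
Definition rdd m (s : 'S_m) := rdd_w (pword s).
Definition lda m (s : 'S_m) := lda_w (pword s).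

Local Open Scope ring_scope.

Definition Ppoly (R : comRingType) (n : nat) (u1 u2 u3 u4 a b : R) : R :=
  \sum_(s : 'S_(n.+1))
    u1 ^+ Vst s * u2 ^+ (Wst s - 1) * u3 ^+ rdd s * u4 ^+ lda s
    * a ^+ (LRmax s - 1) * b ^+ (RLmax s - 1).

Definition Apoly (R : comRingType) (n : nat) (x y a b : R) : R :=
  \sum_(s : 'S_(n.+1))
    x ^+ asc s * y ^+ des s * a ^+ (LRmax s - 1) * b ^+ (RLmax s - 1).

(* Main.v *)
Require Import Defs.
From mathcomp Require Import all_boot all_order all_algebra all_fingroup.
From mathcomp Require Import zify ring.
Import GRing.Theory.
Set Implicit Arguments. Unset Strict Implicit. Unset Printing Implicit Defensive.

Module M_A1.
Local Open Scope ring_scope.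

Definition pairs (l : seq bool) := zip l (behead l).
Lemma pairs_cons2 x y l : pairs [:: x, y & l] = (x, y) :: pairs (y :: l).
Proof. by []. Qed.

Section Leibniz.
Variables (R : comNzRingType) (T : Type).
Fixpoint DL (v d : T -> R) (l : seq T) : R :=
  if l is q :: l' then d q * \prod_(r <- l') v r + v q * DL v d l' else 0.
Lemma eq_DL v1 v2 d1 d2 l : v1 =1 v2 -> d1 =1 d2 -> DL v1 d1 l = DL v2 d2 l.
Proof.
move=> Hv Hd; elim: l => //= q l ->; rewrite Hv Hd; congr (_ * _ + _).
by apply: eq_bigr => ? _; exact: Hv.
Qed.
End Leibniz.

Lemma bump0 i : bump 0 i = i.+1. Proof. by rewrite /bump leq0n add1n. Qed.

Definition insB (g : nat) (l : seq bool) := take g l ++ false :: true :: drop g.+1 l.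

Section Glemma.
Variables (R : comNzRingType) (var : bool * bool -> R).
Definition dvarG (q : bool * bool) : R :=
  (if ~~ q.1 then var (false,true) * var (true, q.2) else 0) +
  (if q.2 then var (q.1,false) * var (false,true) else 0).
Definition PP l := \prod_(q <- pairs l) var q.
Lemma PP_cons2 x y l : PP [:: x, y & l] = var (x, y) * PP (y :: l).
Proof. by rewrite /PP pairs_cons2 big_cons. Qed.
Lemma PP1 x : PP [:: x] = 1.
Proof. by rewrite /PP /= big_nil. Qed.

Lemma Glemma m b0 bl : size bl = m.+1 ->
  \sum_(g < m.+2) (if ((g != 0%N :> nat) || ~~ b0) && ((g != m.+1 :> nat) || last b0 bl)
                   then PP (insB g (b0 :: bl)) else 0)
  = DL var dvarG (pairs (b0 :: bl)).
Proof.
elim: m b0 bl => [|m IH] b0 [|b1 bl] //=.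
  case: bl => //= _.
  rewrite !big_ord_recl big_ord0 /= /insB /= !PP_cons2 !PP1 /dvarG big_nil.
  by case: b0; case: b1 => /=; ring.
case=> Hs; rewrite -(IH b1 bl Hs).
rewrite big_ord_recl [in RHS]big_ord_recl big_ord_recl !lift0 /=.
rewrite mulrDr !addrA; congr (_ + _); last first.
  rewrite big_distrr /=; apply: eq_bigr => k _.
  rewrite !bump0 eqSS.
  case: ifP => _; last by rewrite mulr0.
  by rewrite /insB /= PP_cons2.
case: bl Hs => // b2 bl _.
rewrite /insB /= !PP_cons2.
by case: b0; case: b1; rewrite /dvarG /= ?big_cons -/(pairs _) -/(PP _); ring.
Qed.
End Glemma.

Lemma TF_FT b l : (count (pred1 (true,false)) (pairs (b :: l)) + last b l
   = count (pred1 (false,true)) (pairs (b :: l)) + b)%N.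
Proof.
elim: l b => [|c l IH] b; first by case: b.
rewrite pairs_cons2 /= -addnA IH.
by case: b; case: c => /=; rewrite ?add0n ?addn0 ?add1n ?addn1.
Qed.

Lemma PP_rcons (R : comNzRingType) (var : bool * bool -> R) y l x :
  PP var (rcons (y :: l) x) = PP var (y :: l) * var (last y l, x).
Proof.
elim: l y => [|z l IH] y /=; first by rewrite PP_cons2 !PP1 mulr1 mul1r.
by rewrite PP_cons2 IH PP_cons2 mulrA.
Qed.

Lemma Alemma (R : comNzRingType) (v : bool -> R) L :
  \sum_(i < size L) \prod_(t <- insB i L) v t = DL v (fun _ => v false * v true) L.
Proof.
elim: L => [|b L IH]; first by rewrite big_ord0.
rewrite /= big_ord_recl /insB /= !big_cons -IH big_distrr /= mulrA drop0.
congr (_ + _); apply: eq_bigr => i _.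
by rewrite add0n bump0 big_cons.
Qed.

Lemma Alemma' (R : comNzRingType) (v : bool -> R) k L : size L = k ->
  \sum_(i < k) \prod_(t <- insB i L) v t = DL v (fun _ => v false * v true) L.
Proof. by move=> <-; apply: Alemma. Qed.

End M_A1.
Import M_A1.

Module M_B1.

Section PermFacts.
Variable m : nat.
Variable s : 'S_m.
Local Notation h := (pget (pword s)).

Lemma size_pword : size (pword s) = m.
Proof. by rewrite /pword size_map size_enum_ord. Qed.

Lemma h0 : h 0 = 0. Proof. by []. Qed.

Lemma hin (k : 'I_m) : h k.+1 = (s k).+1.
Proof.
rewrite /pget /= nth_cat size_pword ltn_ord /pword (nth_map k) ?size_enum_ord //.
by rewrite nth_ord_enum.
Qed.

Lemma hout i : m < i -> h i = 0.
Proof.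
case: i => // i; rewrite ltnS => Hi.
rewrite /pget /= nth_cat size_pword ltnNge Hi /=.
by case: (i - m) => [|[]].
Qed.

Lemma hpos i : 0 < i <= m -> 0 < h i.
Proof.
case: i => // i /= Hi; by rewrite (hin (Ordinal Hi)).
Qed.

Lemma hinj i j : 0 < i <= m -> 0 < j <= m -> h i = h j -> i = j.
Proof.
case: i => // i; case: j => // j /= Hi Hj.
rewrite (hin (Ordinal Hi)) (hin (Ordinal Hj)) => [[]] /val_inj /perm_inj.
by move/(congr1 val) => /= ->.
Qed.

Lemma hadj i : 0 < m -> i <= m -> h i != h i.+1.
Proof.
move=> Hm Hi; case: i Hi => [|i] Hi.
  by rewrite h0 eq_sym -lt0n; apply: hpos; lia.
case: (ltnP i.+1 m) => H.
  apply/eqP => /hinj; lia.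
have -> : i.+1 = m by lia.
by rewrite (hout (leqnn _)) -lt0n; apply: hpos; lia.
Qed.
End PermFacts.

End M_B1.
Import M_B1.

Module M_B2.

Definition fb m (s : 'S_m) i := pget (pword s) i < pget (pword s) i.+1.
Definition Bs m (s : 'S_m) := [seq fb s i | i <- iota 0 m.+1].
Definition Mid (l : seq bool) := take (size l).-2 (behead l).

Lemma pairs_map (f : nat -> bool) k n :
  pairs [seq f i | i <- iota k n.+1] = [seq (f i, f i.+1) | i <- iota k n].
Proof.
elim: n k => [|n IH] k //=.
by rewrite -IH.
Qed.

Lemma count_shift (P : pred nat) n : count P (iota 1 n) = count (fun i => P i.+1) (iota 0 n).
Proof. by rewrite (iotaDl 1 0) count_map. Qed.

Lemma gtNlt a b : a != b -> (b < a) = ~~ (a < b).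
Proof. by case: ltngtP. Qed.

Lemma cnt_ends2 (P : pred nat) m : 0 < m -> P 1 = false -> P m = false ->
  count P (iota 2 (m - 2)) = count P (iota 1 m).
Proof.
case: m => [|[|m]] // _ H1 Hm; first by rewrite /= H1.
have -> : (m.+2 - 2 = m)%N by lia.
have -> : iota 1 m.+2 = 1 :: (iota 2 m ++ iota (2 + m) 1) by rewrite -iotaD addn1.
by rewrite /= count_cat /= H1 add0n add2n Hm /= !addn0.
Qed.

Lemma cnt_end1 (P : pred nat) m : 0 < m -> P 1 = false ->
  count P (iota 2 m.-1) = count P (iota 1 m).
Proof. by case: m => // m _ H1; rewrite /= H1. Qed.

Lemma cnt_end2 (P : pred nat) m : 0 < m -> P m = false ->
  count P (iota 1 m.-1) = count P (iota 1 m).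
Proof.
case: m => // m _ Hm.
have -> : iota 1 m.+1 = iota 1 m ++ iota (1 + m) 1 by rewrite -iotaD addn1.
by rewrite count_cat /= add1n Hm /= !addn0.
Qed.

Section Stats.
Variable m : nat.
Hypothesis Hm : 0 < m.
Variable s : 'S_m.
Local Notation h := (pget (pword s)).

Lemma count_pairs q : count (pred1 q) (pairs (Bs s)) =
  count (fun i => (h i.-1 < h i, h i < h i.+1) == q) (iota 1 m).
Proof. by rewrite /Bs pairs_map count_map count_shift. Qed.

Lemma Wst_E : Wst s = count (pred1 (true,false)) (pairs (Bs s)).
Proof.
rewrite count_pairs /Wst /W_w size_pword count_shift [RHS]count_shift.
apply: eq_in_count => i; rewrite mem_iota => /andP [_ Hi] /=.
by rewrite xpair_eqE /= eqb_id eqbF_neg (gtNlt (hadj s (i:=i.+1) Hm _)) //; lia.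
Qed.

Lemma Vst_E : Vst s = count (pred1 (false,true)) (pairs (Bs s)).
Proof.
rewrite count_pairs /Vst /V_w size_pword cnt_ends2 //; last first.
- by rewrite (hout s (ltnSn m)) ltn0 andbF.
rewrite count_shift [RHS]count_shift.
apply: eq_in_count => i; rewrite mem_iota => /andP [_ Hi] /=.
by rewrite xpair_eqE /= eqb_id eqbF_neg (gtNlt (hadj s (i:=i) Hm _)) //; lia.
Qed.

Lemma rdd_E : rdd s = count (pred1 (false,false)) (pairs (Bs s)).
Proof.
rewrite count_pairs /rdd /rdd_w size_pword cnt_end1 //.
rewrite count_shift [RHS]count_shift.
apply: eq_in_count => i; rewrite mem_iota => /andP [_ Hi] /=.
rewrite xpair_eqE /= !eqbF_neg (gtNlt (hadj s (i:=i) Hm _)); last by lia.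
by rewrite (gtNlt (hadj s (i:=i.+1) Hm _)) //; lia.
Qed.

Lemma lda_E : lda s = count (pred1 (true,true)) (pairs (Bs s)).
Proof.
rewrite count_pairs /lda /lda_w size_pword cnt_end2 //; last by rewrite (hout s (ltnSn m)) ltn0 andbF.
rewrite count_shift [RHS]count_shift.
apply: eq_in_count => i; rewrite mem_iota => /andP [_ Hi] /=.
by rewrite xpair_eqE /= !eqb_id.
Qed.

Lemma Mid_Bs : Mid (Bs s) = [seq fb s i | i <- iota 1 m.-1].
Proof.
rewrite /Mid /Bs size_map size_iota /= -map_take take_iota.
by congr (map _ (iota _ _)); lia.
Qed.

Lemma asc_E : asc s = count id (Mid (Bs s)).
Proof. by rewrite Mid_Bs count_map /asc /asc_w size_pword. Qed.

Lemma des_E : des s = count negb (Mid (Bs s)).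
Proof.
rewrite Mid_Bs count_map /des /des_w size_pword.
apply: eq_in_count => i; rewrite mem_iota => /andP [Hi1 Hi] /=.
rewrite /fb (gtNlt (hadj s (i:=i) Hm _)) //; lia.
Qed.

Lemma Bs_head : Bs s = true :: [seq fb s i | i <- iota 1 m].
Proof. by rewrite /Bs /= /fb h0 hpos //; lia. Qed.

Lemma Bs_last : last true (Bs s) = false.
Proof.
rewrite -nth_last /Bs size_map size_iota (nth_map 0) ?size_iota // nth_iota // add0n /=.
by rewrite /fb (hout s (ltnSn m)) ltn0.
Qed.

Lemma Wst_V : Wst s = (Vst s).+1.
Proof.
rewrite Wst_E Vst_E.
have := TF_FT true [seq fb s i | i <- iota 1 m].
have L := Bs_last; rewrite Bs_head /= in L.
by rewrite L -Bs_head /= addn0 addn1.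
Qed.
End Stats.

End M_B2.
Import M_B2.

Module M_B3.

Section Lift.
Variables (m : nat) (t : 'S_m) (g : 'I_m.+1).
Local Notation s := (lift_perm g ord0 t).
Local Notation hT := (pget (pword t)).
Local Notation hS := (pget (pword s)).

Lemma hS_g : hS g.+1 = 1.
Proof. by rewrite (hin s g) lift_perm_id. Qed.

Lemma hS_bump (k : 'I_m) : hS (bump g k).+1 = (hT k.+1).+1.
Proof.
have := hin s (lift g k); rewrite lift_perm_lift /= => ->.
by rewrite bump0 (hin t k).
Qed.

Lemma hS_lo i : 0 < i <= g -> hS i = (hT i).+1.
Proof.
case: i => // i /= Hi.
have Hk : i < m by have := ltn_ord g; lia.
have := hS_bump (Ordinal Hk); rewrite /bump /=.
have -> : (g <= i) = false by apply/negbTE; rewrite -ltnNge.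
by rewrite add0n.
Qed.

Lemma hS_hi i : g.+1 < i <= m.+1 -> hS i = (hT i.-1).+1.
Proof.
case: i => [|[|i]] //= Hi.
have Hk : i < m by lia.
have := hS_bump (Ordinal Hk); rewrite /bump /=.
have -> : (g <= i) = true by lia.
by rewrite add1n.
Qed.

Hypothesis Hm : 0 < m.

Lemma fb_lo i : i < g -> fb s i = fb t i.
Proof.
move=> Hi; rewrite /fb.
case: i Hi => [|i] Hi.
  have H1 : 0 < hT 1 by apply: hpos; lia.
  by rewrite h0 h0 (hS_lo (i:=1)) ?H1 //; lia.
rewrite (hS_lo (i:=i.+1)) ?(hS_lo (i:=i.+2)) //; lia.
Qed.

Lemma fb_g : fb s g = (g == 0 :> nat).
Proof.
rewrite /fb hS_g; case E : (nat_of_ord g) => [|i].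
  by rewrite h0.
by rewrite hS_lo //= ?ltnS ?ltn0 // E.
Qed.

Lemma fb_g1 : fb s g.+1 = (g != m :> nat).
Proof.
rewrite /fb hS_g.
case: (ltnP g m) => Hg.
  rewrite hS_hi; last by lia.
  have H1 : 0 < hT g.+1 by apply: hpos; lia.
  by rewrite /= ltnS H1; apply/esym; rewrite neq_ltn Hg.
have -> : nat_of_ord g = m by have := ltn_ord g; lia.
by rewrite (hout s (ltnSn m.+1)) eqxx.
Qed.

Lemma fb_hi i : g.+1 < i <= m.+1 -> fb s i = fb t i.-1.
Proof.
move=> Hi; rewrite /fb hS_hi //.
case: (ltnP i m.+1) => Hi2.
  by rewrite hS_hi ?ltnS //=; [case: i Hi Hi2 | lia].
have Ei : i = m.+1 by lia.
rewrite Ei (hout s (ltnSn m.+1)) /= (hout t (ltnSn m)) //.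
Qed.

Lemma Bs_lift : Bs s = take g (Bs t) ++ (g == 0 :> nat) :: (g != m :> nat) :: drop g.+1 (Bs t).
Proof.
have Hg := ltn_ord g.
rewrite /Bs -map_take -map_drop take_iota drop_iota.
have -> : minn g m.+1 = g by lia.
have -> : (m.+2 = g + (m - g).+2)%N by lia.
rewrite iotaD map_cat add0n; congr (_ ++ _).
  by apply/eq_in_map => i; rewrite mem_iota => /andP [_ Hi]; apply: fb_lo.
rewrite /= -fb_g -fb_g1; congr [:: _, _ & _].
rewrite add0n (iotaDl 1) -map_comp.
have -> : (m.+1 - g.+1 = m - g)%N by lia.
apply/eq_in_map => i; rewrite mem_iota => /andP [Hi1 Hi2] /=.
rewrite fb_hi //; lia.
Qed.
End Lift.

End M_B3.
Import M_B3.

Module M_B4.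

Lemma iota_split a k n : k < n -> iota a n = iota a k ++ (a + k)%N :: iota (a + k).+1 (n - k.+1).
Proof.
move=> Hk; rewrite -{1}(subnKC (ltnW Hk)) iotaD.
have -> : (n - k = (n - k.+1).+1)%N by lia.
by [].
Qed.

Section LiftLR.
Variables (m : nat) (t : 'S_m) (g : 'I_m.+1).
Hypothesis Hm : 0 < m.
Local Notation s := (lift_perm g ord0 t).
Local Notation hT := (pget (pword t)).
Local Notation hS := (pget (pword s)).

Lemma allS_lo a n y : 0 < a -> (a + n <= g.+1)%N ->
  all (fun j => hS j < y.+1) (iota a n) = all (fun j => hT j < y) (iota a n).
Proof.
move=> Ha Han; apply: eq_in_all => j; rewrite mem_iota => /andP [H1 H2].
by rewrite hS_lo ?ltnS //; lia.
Qed.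

Lemma allS_hi a n y : g.+1 < a -> (a + n <= m.+2)%N ->
  all (fun j => hS j < y.+1) (iota a n) = all (fun j => hT j < y) (iota a.-1 n).
Proof.
move=> Ha Han; have -> : a = (1 + a.-1)%N by lia.
rewrite (iotaDl 1) all_map /=; apply: eq_in_all => j; rewrite mem_iota => /andP [H1 H2] /=.
by rewrite hS_hi ?ltnS //; lia.
Qed.

Lemma hTpos i : 0 < i <= m -> 0 < hT i.
Proof. exact: hpos. Qed.

Lemma LR_lift : LRmax s = (LRmax t + (g == 0 :> nat))%N.
Proof.
have Hg := ltn_ord g.
rewrite /LRmax /LRmax_w !size_pword.
rewrite (iota_split 1 (k := g)) // count_cat /= add1n.
have -> : (m.+1 - g.+1 = m - g)%N by lia.
have -> : iota 1 m = iota 1 g ++ iota g.+1 (m - g).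
  by rewrite -[g.+1]add1n -iotaD subnKC //; lia.
rewrite count_cat -!addnA; congr (_ + _)%N.
  apply: eq_in_count => i; rewrite mem_iota => /andP [H1 H2] /=.
  by rewrite hS_lo ?allS_lo //; lia.
rewrite hS_g allS_lo //.
rewrite addnC; congr (_ + _)%N; last first.
  by case: (nat_of_ord g) => //= k; rewrite ltn0.
rewrite (iotaDl 1) count_map; apply: eq_in_count => i; rewrite mem_iota => /andP [H1 H2] /=.
rewrite add1n (iota_split 1 (k := g)); last by lia.
rewrite add1n all_cat /= hS_g hS_hi; last by lia.
rewrite /= allS_lo; try by lia.
rewrite ltnS hTpos /=; last by lia.
rewrite allS_hi; try by lia.
rewrite -all_cat /= -[g.+1]add1n -iotaD; congr all; congr iota; lia.
Qed.

Lemma RL_lift : RLmax s = (RLmax t + (g == m :> nat))%N.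
Proof.
have Hg := ltn_ord g.
rewrite /RLmax /RLmax_w !size_pword.
rewrite (iota_split 1 (k := g)) // count_cat /= add1n.
have -> : (m.+1 - g.+1 = m - g)%N by lia.
have -> : iota 1 m = iota 1 g ++ iota g.+1 (m - g).
  by rewrite -[g.+1]add1n -iotaD subnKC //; lia.
rewrite count_cat -!addnA; congr (_ + _)%N.
  apply: eq_in_count => i; rewrite mem_iota => /andP [H1 H2] /=.
  rewrite hS_lo; try by lia.
  rewrite (iota_split i.+1 (k := g - i)); last by lia.
  have -> : (i.+1 + (g - i) = g.+1)%N by lia.
  rewrite all_cat /= hS_g ltnS hTpos /=; last by lia.
  rewrite allS_lo; try by lia.
  rewrite allS_hi; try by lia.
  rewrite -all_cat.
  have -> : iota g.+2.-1 (m.+1 - i - (g - i).+1) = iota (i.+1 + (g-i)) (m.+1 - i - (g - i).+1).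
    by congr iota; lia.
  rewrite -iotaD; congr all; congr iota; lia.
rewrite hS_g allS_hi; try by lia.
rewrite addnC; congr (_ + _)%N; last first.
  case: (ltnP g m) => Hgm.
    rewrite (iota_split g.+1 (k := 0)); last by lia.
    have -> : (g == m :> nat) = false by apply/negbTE; rewrite neq_ltn Hgm.
    by [].
  have -> : (m - g = 0)%N by lia.
  have -> : (g == m :> nat) = true by apply/eqP; lia.
  by [].
rewrite (iotaDl 1) count_map; apply: eq_in_count => i; rewrite mem_iota => /andP [H1 H2] /=.
rewrite add1n hS_hi /=; try by lia.
rewrite allS_hi; try by lia.
by congr all; congr iota; lia.
Qed.
End LiftLR.

End M_B4.
Import M_B4.

Module M_C1.
Local Open Scope ring_scope.

Lemma sum_fiber (R : nmodType) m (F : 'S_m.+1 -> R) (g : 'I_m.+1) :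
  \sum_(s : 'S_m.+1 | s g == ord0) F s = \sum_(t : 'S_m) F (lift_perm g ord0 t).
Proof.
rewrite (reindex (lift_perm g ord0)); last first.
  pose ulsf i (s : 'S_m.+1) k := odflt k (unlift (s i) (s (lift i k))).
  have ulsfK i (s : 'S_m.+1) k: lift (s i) (ulsf i s k) = s (lift i k).
    rewrite /ulsf; have:= neq_lift i k.
    by rewrite -(can_eq (permK s)) => /unlift_some[] ? ? ->.
  have inj_ulsf: injective (ulsf g _).
    move=> s; apply: can_inj (ulsf (s g) s^-1%g) _ => k'.
    by rewrite {1}/ulsf ulsfK !permK liftK.
  exists (fun s => perm (inj_ulsf s)) => [s _ | s].
    by apply/permP=> k'; rewrite permE /ulsf lift_perm_lift lift_perm_id liftK.
  move/(s _ =P _) => si0; apply/permP=> k.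
  case: (unliftP g k) => [k'|] ->; rewrite ?lift_perm_id //.
  by rewrite lift_perm_lift -si0 permE ulsfK.
by apply: eq_bigl => t; rewrite lift_perm_id eqxx.
Qed.

Lemma sum_lift (R : nmodType) m (F : 'S_m.+1 -> R) :
  \sum_(s : 'S_m.+1) F s = \sum_(t : 'S_m) \sum_(g < m.+1) F (lift_perm g ord0 t).
Proof.
rewrite exchange_big /=.
transitivity (\sum_(s : 'S_m.+1) \sum_(g < m.+1 | s g == ord0) F s).
  apply: eq_bigr => s _; rewrite (big_pred1 ((s^-1)%g ord0)) // => g /=.
  by rewrite -(inj_eq (@perm_inj _ (s^-1)%g)) permK.
rewrite (exchange_big_dep predT) //=; apply: eq_bigr => g _.
exact: sum_fiber.
Qed.

Lemma sum_split3 (R : nmodType) k (F : nat -> R) :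
  \sum_(g < k.+2) F g = F 0%N + \sum_(j < k) F j.+1 + F k.+1.
Proof.
rewrite big_ord_recl big_ord_recr /= addrA; congr (_ + _ + _).
Qed.

Lemma LR_pos m (s : 'S_m) : (0 < m)%N -> (0 < LRmax s)%N.
Proof.
by rewrite /LRmax /LRmax_w size_pword; case: m s => // m s _ /=.
Qed.

Lemma RL_pos m (s : 'S_m) : (0 < m)%N -> (0 < RLmax s)%N.
Proof.
rewrite /RLmax /RLmax_w size_pword; case: m s => // m s _.
have -> : iota 1 m.+1 = iota 1 m ++ iota (1 + m) 1 by rewrite -iotaD addn1.
by rewrite count_cat /= add1n subnn /= addn1.
Qed.

Lemma take_lastI (T : Type) (x : T) l k : size l = k.+1 -> l = rcons (take k l) (last x l).
Proof.
case/lastP: l => // l z; rewrite size_rcons => [[<-]].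
by rewrite last_rcons -!cats1 (take_size_cat _ (erefl (size l))).
Qed.

End M_C1.
Import M_C1.

Module M_C2.
Local Open Scope ring_scope.

Section Rec.
Variable R : comNzRingType.

Definition PbS n (var : bool * bool -> R) (a b : R) :=
  \sum_(s : 'S_n.+1) PP var (Bs s) * a ^+ (LRmax s - 1) * b ^+ (RLmax s - 1).
Definition AbS n (v : bool -> R) (c : R) :=
  \sum_(s : 'S_n.+1) (\prod_(t <- Mid (Bs s)) v t) * c ^+ (LRmax s - 1) * c ^+ (RLmax s - 1).

Lemma lift_weights n (t : 'S_n.+1) (g : 'I_n.+2) (a b : R) :
  a ^+ (LRmax (lift_perm g ord0 t) - 1) * b ^+ (RLmax (lift_perm g ord0 t) - 1) =
  (a ^+ (g == 0 :> nat) * b ^+ (g == n.+1 :> nat)) * (a ^+ (LRmax t - 1) * b ^+ (RLmax t - 1)).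
Proof.
have Hm : (0 < n.+1)%N by [].
rewrite LR_lift // RL_lift //.
have -> : (LRmax t + (g == 0 :> nat) - 1 = (g == 0 :> nat) + (LRmax t - 1))%N.
  by have := LR_pos t Hm; lia.
have -> : (RLmax t + (g == n.+1 :> nat) - 1 = (g == n.+1 :> nat) + (RLmax t - 1))%N.
  by have := RL_pos t Hm; lia.
rewrite !exprD; ring.
Qed.

Lemma RecP n var a b :
  PbS n.+1 var a b = \sum_(t : 'S_n.+1)
    ((a * var (true,true) + b * var (false,false)) * PP var (Bs t)
      + DL var (dvarG var) (pairs (Bs t))) * a ^+ (LRmax t - 1) * b ^+ (RLmax t - 1).
Proof.
have Hm : (0 < n.+1)%N by [].
rewrite /PbS sum_lift; apply: eq_bigr => t _.
under eq_bigr => g _ do rewrite -mulrA lift_weights Bs_lift // mulrA.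
rewrite -big_distrl -[in RHS]mulrA; congr (_ * _).
have HB := Bs_head Hm t.
set B1 := [seq fb t i | i <- iota 1 n.+1] in HB.
have HL : last true B1 = false by have := Bs_last t; rewrite HB.
have HS : size B1 = n.+1 by rewrite /B1 size_map size_iota.
rewrite HB; clearbody B1.
rewrite -(Glemma var true HS) big_ord_recl big_ord_recr.
rewrite [in RHS]big_ord_recl [in RHS]big_ord_recr !lift0 /=.
rewrite eqxx HL /= drop0 PP_cons2 (drop_oversize (n:=n.+1)) ?HS //.
have -> : [:: n.+1 == 0%N; n.+1 != n.+1] = [:: false; false] by rewrite eqxx.
rewrite eqxx /=.
have -> : true :: take n B1 ++ [:: false; false] = rcons (true :: B1) false.
  by rewrite {2}(take_lastI true HS) HL /= -!cats1 -catA.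
rewrite PP_rcons HL expr0 expr1 mulr1 mul1r add0r addr0.
have -> : \sum_(i < n) PP var (true :: take (0 + i) B1 ++
            [:: bump 0 i == 0%N, bump 0 i != n.+1 & drop (bump 0 i) B1]) *
      (a ^+ 0 * b ^+ (bump 0 i == n.+1)) =
  \sum_(i < n) (if (bump 0 i != n.+1) || false then PP var (insB (bump 0 i) (true :: B1)) else 0).
  apply: eq_bigr => i _; rewrite bump0 add0n /=.
  have -> : (i.+1 == n.+1) = false by rewrite eqSS; apply/negbTE; rewrite neq_ltn ltn_ord.
  by rewrite expr0 !mulr1 /insB /=.
rewrite expr1; ring.
Qed.

Lemma RecA n (v : bool -> R) c :
  AbS n.+1 v c = \sum_(t : 'S_n.+1)
    ((c * v true + c * v false) * (\prod_(x <- Mid (Bs t)) v x)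
      + DL v (fun _ => v false * v true) (Mid (Bs t))) * c ^+ (LRmax t - 1) * c ^+ (RLmax t - 1).
Proof.
have Hm : (0 < n.+1)%N by [].
rewrite /AbS sum_lift; apply: eq_bigr => t _.
have E : forall g : 'I_n.+2,
  (\prod_(t0 <- Mid (Bs (lift_perm g ord0 t))) v t0) *
     c ^+ (LRmax (lift_perm g ord0 t) - 1) * c ^+ (RLmax (lift_perm g ord0 t) - 1) =
  ((\prod_(t0 <- Mid (take g (Bs t) ++ (g == 0 :> nat) :: (g != n.+1 :> nat) :: drop g.+1 (Bs t))) v t0) *
     (c ^+ (g == 0 :> nat) * c ^+ (g == n.+1 :> nat))) * (c ^+ (LRmax t - 1) * c ^+ (RLmax t - 1)).
  by move=> g; rewrite -mulrA lift_weights Bs_lift // mulrA.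
rewrite (eq_bigr _ (fun g _ => E g)) -big_distrl -[in RHS]mulrA; congr (_ * _).
have HB := Bs_head Hm t.
set B1 := [seq fb t i | i <- iota 1 n.+1] in HB.
have HL : last true B1 = false by have := Bs_last t; rewrite HB.
have HS : size B1 = n.+1 by rewrite /B1 size_map size_iota.
rewrite HB; clearbody B1.
have HM : Mid (true :: B1) = take n B1 by rewrite /Mid /= HS.
have HSM : size (take n B1) = n by rewrite size_takel // HS.
rewrite HM -(Alemma' v HSM) big_ord_recl big_ord_recr !lift0 /=.
rewrite eqxx /= drop0 (drop_oversize (n:=n.+1)) ?HS //.
have -> : [:: n.+1 == 0%N; false] = [:: false; false] by [].
rewrite eqxx /=.
have -> : true :: take n B1 ++ [:: false; false] = rcons (true :: B1) false.
  by rewrite {2}(take_lastI true HS) HL /= -!cats1 -catA.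
have -> : Mid (rcons (true :: B1) false) = rcons (take n B1) false.
  rewrite /Mid size_rcons /= HS -cats1 (take_size_cat _ HS).
  by rewrite {1}(take_lastI true HS) HL.
have -> : Mid [:: true, true & B1] = true :: take n B1 by rewrite /Mid /= HS.
rewrite -cats1 big_cat big_cons /= !big_cons !big_nil mulr1.
have -> : \sum_(i < n) (\prod_(x <- Mid (true :: take (0 + i) B1 ++
            [:: bump 0 i == 0%N, bump 0 i != n.+1 & drop (bump 0 i) B1])) v x) *
      (c ^+ 0 * c ^+ (bump 0 i == n.+1)) =
  \sum_(i < n) \prod_(t0 <- insB i (take n B1)) v t0.
  apply: eq_bigr => i _; rewrite bump0 add0n /=.
  have -> : (i.+1 == n.+1) = false by rewrite eqSS; apply/negbTE; rewrite neq_ltn ltn_ord.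
  rewrite expr0 !mulr1; congr (\prod_(x <- _) _).
  have Hi := ltn_ord i.
  rewrite /Mid /= size_cat size_take HS ltnS (ltnW Hi) /= /insB.
  rewrite take_cat size_take HS ltnS (ltnW Hi) ltnNge.
  have HK : size (drop i.+1 B1) = (n - i)%N by rewrite size_drop HS.
  rewrite HK.
  have -> : (i <= (i + (n - i).+2).-1)%N = true by lia.
  have -> : ((i + (n - i).+2).-1 - i = (n - i.+1).+2)%N by lia.
  rewrite /= take_takel; last by lia.
  rewrite take_drop.
  by have -> : (n - i.+1 + i.+1 = n)%N by lia.
rewrite !expr1 !expr0; ring.
Qed.
End Rec.

End M_C2.
Import M_C2.

Module M_C3.
Local Open Scope ring_scope.

Section Poly.
Variable R : comNzRingType.

Lemma coef1M (p q : {poly R}) : (p * q)`_1 = p`_0 * q`_1 + p`_1 * q`_0.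
Proof. by rewrite coefM big_ord_recr big_ord_recr big_ord0 /= add0r. Qed.

Lemma coef_prod (T : Type) (F : T -> {poly R}) l :
  (\prod_(q <- l) F q)`_0 = \prod_(q <- l) (F q)`_0 /\
  (\prod_(q <- l) F q)`_1 = DL (fun q => (F q)`_0) (fun q => (F q)`_1) l.
Proof.
elim: l => [|q l [IH0 IH1]]; first by rewrite !big_nil !coef1.
rewrite !big_cons coef0M coef1M IH0 IH1 /=; split => //.
by rewrite addrC.
Qed.

Definition lin (c d : R) : {poly R} := c%:P + 'X * d%:P.
Lemma lin0 c d : (lin c d)`_0 = c.
Proof. by rewrite /lin coefD coefC coefXM /= addr0. Qed.
Lemma lin1 c d : (lin c d)`_1 = d.
Proof. by rewrite /lin coefD coefC coefXM /= add0r coefC. Qed.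

Lemma coef_w (p : {poly R}) (a b : R) k l i :
  (p * a%:P ^+ k * b%:P ^+ l)`_i = p`_i * a ^+ k * b ^+ l.
Proof.
rewrite -!polyC_exp -mulrA -polyCM mulrC coefCM; ring.
Qed.
End Poly.

Lemma pascal (R : comNzRingType) n (F : nat -> R) (e : R) :
  \sum_(k < n.+2) 'C(n.+1, k)%:R * F k * e ^+ (n.+1 - k) =
  \sum_(k < n.+1) 'C(n, k)%:R * F k.+1 * e ^+ (n - k)
  + e * \sum_(k < n.+1) 'C(n, k)%:R * F k * e ^+ (n - k).
Proof.
rewrite big_ord_recl.
under eq_bigr => k _ do rewrite lift0 binS natrD !mulrDl.
rewrite big_split /= addrA addrC; congr (_ + _).
rewrite big_ord_recr /= (@bin_small n n.+1 (ltnSn n)) !mul0r addr0.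
rewrite [in RHS]big_ord_recl mulrDr; congr (_ + _).
  by rewrite !bin0 !subn0 exprS; ring.
rewrite big_distrr /=; apply: eq_bigr => k _.
rewrite bump0 subSS.
have Hk := ltn_ord k.
have -> : (n - k = (n - k.+1).+1)%N by lia.
by rewrite exprS; ring.
Qed.

End M_C3.
Import M_C3.

Module M_C4.
Local Open Scope ring_scope.

Definition varP (R : comNzRingType) (p u3 u4 : R) (q : bool * bool) : R :=
  match q with
  | (false, true) => p | (true, false) => 1 | (false, false) => u3 | (true, true) => u4
  end.
Definition vA (R : comNzRingType) (x y : R) (b : bool) : R := if b then x else y.

Section Pw.
Variable R : comNzRingType.
Variables x y u3 u4 : R.
Hypothesis Hs : x + y = u3 + u4.
Local Notation p := (x * y).

Lemma varP_coef q :
  (varP (lin x p * lin y p) (lin u3 p) (lin u4 p) q)`_0 = varP p u3 u4 q /\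
  (varP (lin x p * lin y p) (lin u3 p) (lin u4 p) q)`_1 = dvarG (varP p u3 u4) q.
Proof.
case: q => [[] []]; rewrite /varP /dvarG /= ?coef0M ?coef1M ?lin0 ?lin1 ?coef1 /=;
  split => //; rewrite ?mulr0 ?mul0r ?addr0 ?add0r ?mulr1 ?mul1r //.
have -> : x * p + p * y = p * (x + y) by ring.
by rewrite Hs; ring.
Qed.

Lemma vA_coef t : (vA (lin x p) (lin y p) t)`_0 = vA x y t /\ (vA (lin x p) (lin y p) t)`_1 = p.
Proof. by case: t; rewrite /vA lin0 lin1. Qed.
End Pw.

Lemma coef_w2 (R : comNzRingType) k (q : {poly R}) (d : R) j i :
  (k%:R * q * d%:P ^+ j)`_i = k%:R * q`_i * d ^+ j.
Proof.
by rewrite -polyC_natr -polyC_exp mulrC mulrA -polyCM coefCM; ring.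
Qed.

Lemma e_poly (R : comNzRingType) (a b c u3 u4 p : R) : c + c = a + b ->
  a%:P * lin u4 p + b%:P * lin u3 p - c%:P * (lin u3 p + lin u4 p)
  = (a * u4 + b * u3 - c * (u3 + u4))%:P.
Proof.
move=> Hc.
have Ha : a%:P = c%:P + c%:P - b%:P by rewrite -!polyCD -polyCB Hc addrK.
rewrite /lin polyCB polyCD !polyCM polyCD Ha; ring.
Qed.

End M_C4.
Import M_C4.

Module M_C5.
Local Open Scope ring_scope.

Lemma S1_facts (s : 'S_1) : [/\ Bs s = [:: true; false], LRmax s = 1%N & RLmax s = 1%N].
Proof.
split.
- have HB := Bs_head (isT : (0 < 1)%N) s; have HL := Bs_last s.
  by rewrite HB in HL *; rewrite /= in HL *; rewrite HL.
- by rewrite /LRmax /LRmax_w size_pword.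
- by rewrite /RLmax /RLmax_w size_pword.
Qed.

Definition dAS (R : comNzRingType) k (x y c : R) :=
  \sum_(s : 'S_k.+1) DL (vA x y) (fun _ => x * y) (Mid (Bs s)) * c ^+ (LRmax s - 1) * c ^+ (RLmax s - 1).

Lemma RecA' (R : comNzRingType) k (x y c : R) :
  AbS k.+1 (vA x y) c = c * (x + y) * AbS k (vA x y) c + dAS k x y c.
Proof.
rewrite RecA /AbS /dAS big_distrr -big_split /=; apply: eq_bigr => t _.
rewrite (@eq_DL _ _ (vA x y) (vA x y) _ (fun _ => x * y)) //; last by move=> ? /=; rewrite mulrC.
rewrite /vA /=; ring.
Qed.

Lemma main_claim n : forall (R : comNzRingType) (a b c x y u3 u4 : R),
  c + c = a + b -> x + y = u3 + u4 ->
  PbS n (varP (x * y) u3 u4) a b =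
  \sum_(k < n.+1) 'C(n, k)%:R * AbS k (vA x y) c * (a * u4 + b * u3 - c * (u3 + u4)) ^+ (n - k).
Proof.
elim: n => [|n IH] R a b c x y u3 u4 Hc Hs.
  rewrite big_ord1 bin0 mul1r expr0 mulr1 /PbS /AbS; apply: eq_bigr => s _.
  case: (S1_facts s) => -> -> ->.
  by rewrite PP_cons2 PP1 /Mid /= big_nil subnn !expr0 !mulr1.
set p := x * y.
set e := a * u4 + b * u3 - c * (u3 + u4).
rewrite RecP.
have -> : \sum_(t : 'S_n.+1)
    ((a * varP p u3 u4 (true, true) + b * varP p u3 u4 (false, false)) * PP (varP p u3 u4) (Bs t)
      + DL (varP p u3 u4) (dvarG (varP p u3 u4)) (pairs (Bs t))) * a ^+ (LRmax t - 1) * b ^+ (RLmax t - 1)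
  = (c * (x + y) + e) * PbS n (varP p u3 u4) a b +
    \sum_(t : 'S_n.+1) DL (varP p u3 u4) (dvarG (varP p u3 u4)) (pairs (Bs t)) * a ^+ (LRmax t - 1) * b ^+ (RLmax t - 1).
  rewrite /PbS big_distrr -big_split /=; apply: eq_bigr => t _.
  rewrite /e Hs /=; ring.
rewrite (IH R a b c x y u3 u4 Hc Hs).
have HD : \sum_(t : 'S_n.+1) DL (varP p u3 u4) (dvarG (varP p u3 u4)) (pairs (Bs t)) * a ^+ (LRmax t - 1) * b ^+ (RLmax t - 1)
   = \sum_(k < n.+1) 'C(n, k)%:R * dAS k x y c * e ^+ (n - k).
  have Hc' : c%:P + c%:P = a%:P + b%:P :> {poly R} by rewrite -!polyCD Hc.
  have Hs' : lin x p + lin y p = lin u3 p + lin u4 p.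
    rewrite /lin addrACA [RHS]addrACA -!polyCD Hs //.
  have H := IH {poly R} a%:P b%:P c%:P (lin x p) (lin y p) (lin u3 p) (lin u4 p) Hc' Hs'.
  rewrite e_poly // /PbS in H.
  have H1 := congr1 (fun q : {poly R} => q`_1) H; clear H; simpl in H1.
  transitivity (\sum_(t : 'S_n.+1) (PP (varP (lin x p * lin y p) (lin u3 p) (lin u4 p)) (Bs t)
      * a%:P ^+ (LRmax t - 1) * b%:P ^+ (RLmax t - 1))`_1).
    apply: eq_bigr => t _; rewrite coef_w /PP (coef_prod _ _).2.
    congr (_ * _ * _); apply: eq_DL => q; by case: (varP_coef Hs q).
  rewrite -coef_sum H1 coef_sum.
  apply: eq_bigr => k _; rewrite coef_w2; congr (_ * _ * _).
  rewrite /AbS /dAS coef_sum; apply: eq_bigr => s _.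
  rewrite coef_w (coef_prod _ _).2; congr (_ * _ * _); apply: eq_DL => t; by case: (vA_coef x y t).
rewrite HD (pascal n (fun k => AbS k (vA x y) c) e) /=.
rewrite -/e.
have -> : \sum_(k < n.+1) 'C(n, k)%:R * AbS k.+1 (vA x y) c * e ^+ (n - k) =
  c * (x + y) * \sum_(k < n.+1) 'C(n, k)%:R * AbS k (vA x y) c * e ^+ (n - k)
  + \sum_(k < n.+1) 'C(n, k)%:R * dAS k x y c * e ^+ (n - k).
  rewrite big_distrr -big_split /=; apply: eq_bigr => k _; rewrite RecA'; ring.
ring.
Qed.

End M_C5.
Import M_C5.

Module M_D.
Local Open Scope ring_scope.

Lemma PP_count (R : comNzRingType) (p u3 u4 : R) l :
  \prod_(q <- l) varP p u3 u4 q =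
  p ^+ count (pred1 (false,true)) l * u3 ^+ count (pred1 (false,false)) l
  * u4 ^+ count (pred1 (true,true)) l.
Proof.
elim: l => [|q l IH]; first by rewrite big_nil !expr0 !mulr1.
rewrite big_cons IH; case: q => [[] []] /=; rewrite ?add0n ?add1n ?exprS /=; ring.
Qed.

Lemma prod_vA (R : comNzRingType) (x y : R) L :
  \prod_(t <- L) vA x y t = x ^+ count id L * y ^+ count negb L.
Proof.
elim: L => [|t L IH]; first by rewrite big_nil !expr0 mulr1.
rewrite big_cons IH; case: t => /=; rewrite ?add0n ?add1n ?exprS /vA /=; ring.
Qed.

Lemma Ppoly_eq (R : comNzRingType) n (u1 u2 u3 u4 a b : R) :
  Ppoly n u1 u2 u3 u4 a b = PbS n (varP (u1 * u2) u3 u4) a b.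
Proof.
have Hm : (0 < n.+1)%N by [].
rewrite /Ppoly /PbS; apply: eq_bigr => s _.
rewrite /PP PP_count -(Vst_E Hm) -(rdd_E Hm) -(lda_E Hm) (Wst_V Hm) subn1 /= exprMn.
congr (_ * _ * _); ring.
Qed.

Lemma Apoly_eq (R : comNzRingType) n (x y c : R) :
  Apoly n x y c c = AbS n (vA x y) c.
Proof.
have Hm : (0 < n.+1)%N by [].
rewrite /Apoly /AbS; apply: eq_bigr => s _.
by rewrite prod_vA -(asc_E Hm) -(des_E Hm).
Qed.


End M_D.
Import M_D.

Local Open Scope ring_scope.

Theorem theorem6p1 (R : fieldType) (H2 : (2%:R : R) != 0)
  (u1 u2 u3 u4 a b x y : R)
  (Hsum : x + y = u3 + u4) (Hprod : x * y = u1 * u2) (n : nat) :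
  Ppoly n u1 u2 u3 u4 a b =
  \sum_(0 <= k < n.+1)
    ('C(n, k))%:R * Apoly k x y ((a + b) / 2%:R) ((a + b) / 2%:R)
    * ((b - a) ^+ (n - k) * (u3 - u4) ^+ (n - k) / 2%:R ^+ (n - k)).
Proof.
set c := (a + b) / 2%:R.
have Hc : c + c = a + b by rewrite /c; field.
rewrite Ppoly_eq -Hprod (main_claim n Hc Hsum) big_mkord.
apply: eq_bigr => k _; rewrite Apoly_eq; congr (_ * _).
have -> : a * u4 + b * u3 - c * (u3 + u4) = (b - a) * (u3 - u4) / 2%:R by rewrite /c; field.
by rewrite expr_div_n exprMn.
Qed.
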